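(* Let $d\ge1$, let $H$ be a hypergraph of $d$-intervals and let $w$ be a weight system on $H$. Then $\tau_w(H)\le d\,\tau^*_w(H)$.
   Context: A $d$-interval is a union of at most $d$ pairwise disjoint closed intervals of the real line $\mathbb{R}$. A hypergraph of $d$-intervals is a finite family $H$ of $d$-intervals, regarded as a hypergraph whose vertices are the points of $\mathbb{R}$ and whose edges are the members of $H$. A weight system on $H$ is a function $w:H\to\mathbb{N}$. A $w$-cover is a finitely supported function $g:\mathbb{R}\to\mathbb{N}$ with $\sum_{v\in h}g(v)\ge w(h)$ for every $h\in H$; $\tau_w(H)$ is the minimum of $\sum_v g(v)$ over all $w$-covers. A fractional $w$-cover is defined in the same way but with $g:\mathbb{R}\to\mathbb{R}_{\ge0}$ (finitely supported); $\tau^*_w(H)$ is the infimum of $\sum_v g(v)$ over all fractional $w$-covers. *)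

(* Defs.v *)
From Stdlib Require Import Reals List Lia Lra.
Import ListNotations.
Open Scope R_scope.

(* A closed interval [a,b] is represented by the pair (a,b) with a <= b. *)
Definition interval : Type := (R * R)%type.

Definition is_dinterval (d : nat) (I : list interval) : Prop :=
  (length I <= d)%nat /\
  Forall (fun p => fst p <= snd p) I /\
  ForallOrdPairs (fun p q => snd p < fst q \/ snd q < fst p) I.

Definition in_intervalb (p : interval) (v : R) : bool :=
  if Rle_dec (fst p) v then (if Rle_dec v (snd p) then true else false) else false.

Definition in_dintervalb (I : list interval) (v : R) : bool :=
  existsb (fun p => in_intervalb p v) I.

(* A hypergraph of d-intervals is a finite family H (a list, edge i = nth i H);
   a weight system is w : nat -> nat, w i being the weight of edge i. *)

Definition nat_mass (S : list R) (g : R -> nat) (I : list interval) : nat :=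
  fold_right (fun v acc => ((if in_dintervalb I v then g v else 0) + acc)%nat) 0%nat S.

Definition nat_total (S : list R) (g : R -> nat) : nat :=
  fold_right (fun v acc => (g v + acc)%nat) 0%nat S.

Definition is_w_cover (H : list (list interval)) (w : nat -> nat)
    (S : list R) (g : R -> nat) : Prop :=
  NoDup S /\ (forall v, ~ In v S -> g v = 0%nat) /\
  (forall i, (i < length H)%nat -> (w i <= nat_mass S g (nth i H []))%nat).

Definition tau_w (H : list (list interval)) (w : nat -> nat) (t : nat) : Prop :=
  (exists S g, is_w_cover H w S g /\ nat_total S g = t) /\
  (forall S g, is_w_cover H w S g -> (t <= nat_total S g)%nat).

Definition real_mass (S : list R) (g : R -> R) (I : list interval) : R :=
  fold_right (fun v acc => (if in_dintervalb I v then g v else 0) + acc) 0 S.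

Definition real_total (S : list R) (g : R -> R) : R :=
  fold_right (fun v acc => g v + acc) 0 S.

Definition is_frac_w_cover (H : list (list interval)) (w : nat -> nat)
    (S : list R) (g : R -> R) : Prop :=
  NoDup S /\ (forall v, 0 <= g v) /\ (forall v, ~ In v S -> g v = 0) /\
  (forall i, (i < length H)%nat -> INR (w i) <= real_mass S g (nth i H [])).

Definition is_glb (E : R -> Prop) (m : R) : Prop :=
  (forall x, E x -> m <= x) /\ (forall b, (forall x, E x -> b <= x) -> b <= m).

Definition tau_star_w (H : list (list interval)) (w : nat -> nat) (t : R) : Prop :=
  is_glb (fun x => exists S g, is_frac_w_cover H w S g /\ real_total S g = x) t.

(* Main.v *)
Require Import Defs.
From Stdlib Require Import Reals List Lia Lra ZArith.
Import ListNotations.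
Open Scope R_scope.

Definition sR {A} (l : list A) (p : A -> R) : R := fold_right (fun v acc => p v + acc) 0 l.
Definition sZ {A} (l : list A) (p : A -> Z) : Z := fold_right (fun v acc => (p v + acc)%Z) 0%Z l.
Definition sN {A} (l : list A) (p : A -> nat) : nat := fold_right (fun v acc => (p v + acc)%nat) 0%nat l.

Lemma sR_ext {A} (l : list A) p q : (forall v, In v l -> p v = q v) -> sR l p = sR l q.
Proof. induction l; simpl; intros; auto. rewrite H by auto. rewrite IHl; auto. Qed.
Lemma sZ_ext {A} (l : list A) p q : (forall v, In v l -> p v = q v) -> sZ l p = sZ l q.
Proof. induction l; simpl; intros; auto. rewrite H by auto. rewrite IHl; auto. Qed.
Lemma sR_le {A} (l : list A) p q : (forall v, In v l -> p v <= q v) -> sR l p <= sR l q.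
Proof. induction l; simpl; intros; [lra|].
  assert (sR l p <= sR l q) by (apply IHl; intros; apply H; simpl; auto). specialize (H a (or_introl eq_refl)). lra. Qed.
Lemma sZ_le {A} (l : list A) p q : (forall v, In v l -> (p v <= q v)%Z) -> (sZ l p <= sZ l q)%Z.
Proof. induction l; simpl; intros; [lia|].
  assert (sZ l p <= sZ l q)%Z by (apply IHl; intros; apply H; auto). specialize (H a (or_introl eq_refl)). lia. Qed.
Lemma sR_plus {A} (l : list A) p q : sR l (fun v => p v + q v) = sR l p + sR l q.
Proof. induction l; simpl; [lra|]. rewrite IHl; lra. Qed.
Lemma sR_scal {A} (l : list A) c p : sR l (fun v => c * p v) = c * sR l p.
Proof. induction l; simpl; [lra|]. rewrite IHl; lra. Qed.
Lemma sR_zero {A} (l : list A) : sR l (fun _ => 0) = 0.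
Proof. induction l; simpl; [lra|]. rewrite IHl; lra. Qed.
Lemma sR_nonneg {A} (l : list A) p : (forall v, In v l -> 0 <= p v) -> 0 <= sR l p.
Proof. intros. rewrite <- (sR_zero l). apply sR_le; auto. Qed.
Lemma sR_mid {A} (l1 l2 : list A) m p : sR (l1 ++ m :: l2) p = p m + sR (l1 ++ l2) p.
Proof. induction l1; simpl; [lra|]. unfold sR in *. rewrite IHl1; lra. Qed.
Lemma sZ_mid {A} (l1 l2 : list A) m p : sZ (l1 ++ m :: l2) p = (p m + sZ (l1 ++ l2) p)%Z.
Proof. induction l1; simpl; [lia|]. unfold sZ in *. rewrite IHl1; lia. Qed.
Lemma sN_Z {A} (l : list A) p : Z.of_nat (sN l p) = sZ l (fun v => Z.of_nat (p v)).
Proof. induction l; simpl; auto. rewrite Nat2Z.inj_add, IHl; auto. Qed.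
Lemma sR_len {A} (l : list A) p M : (forall v, In v l -> p v <= M) -> sR l p <= INR (length l) * M.
Proof. induction l; intros; [simpl; lra|]. change (sR (a::l) p) with (p a + sR l p).
  change (length (a::l)) with (S (length l)). rewrite S_INR.
  assert (sR l p <= INR (length l) * M) by (apply IHl; intros; apply H; simpl; auto). specialize (H a (or_introl eq_refl)). lra. Qed.
Lemma lmax {A} (l : list A) (p : A -> R) : l <> [] -> exists I, In I l /\ forall J, In J l -> p J <= p I.
Proof. induction l as [|a l IH]; intros H; [congruence|]. destruct l as [|b l'].
  - exists a; split; [left; auto|]. intros J [<-|[]]; lra.
  - destruct IH as [I [HI HJ]]; [congruence|]. destruct (Rle_dec (p a) (p I)).
    + exists I; split; [right; auto|]. intros J [<-|HJ']; auto.
    + exists a; split; [left; auto|]. intros J [<-|HJ']; [lra|]. specialize (HJ J HJ'); lra. Qed.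
Lemma list_bounds (l : list R) : exists a b, a <= b /\ forall u, In u l -> a <= u <= b.
Proof. induction l as [|x l IH]. - exists 0, 0; split; [lra|]; intros _ [].
  - destruct IH as [a [b [Hab H]]]. exists (Rmin a x), (Rmax b x). split.
    + unfold Rmin, Rmax; destruct Rle_dec; destruct Rle_dec; lra.
    + intros u [<-|Hu]; [unfold Rmin, Rmax; destruct Rle_dec; destruct Rle_dec; lra|].
      specialize (H u Hu); unfold Rmin, Rmax; destruct Rle_dec; destruct Rle_dec; lra. Qed.

Lemma up_mono x y : x <= y -> (up x <= up y)%Z.
Proof. intros. destruct (archimed x), (archimed y).
  assert (IZR (up x) - 1 < IZR (up y)) by lra.
  assert (IZR (up x) < IZR (up y + 1)) by (rewrite plus_IZR; simpl; lra).
  apply lt_IZR in H5. lia. Qed.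
Lemma up_shift x k : up (x + IZR k) = (up x + k)%Z.
Proof. symmetry; apply tech_up; rewrite plus_IZR; destruct (archimed x); lra. Qed.
Lemma up0 : up 0 = 1%Z.
Proof. symmetry; apply tech_up; simpl; lra. Qed.

Definition Fz (f : R -> R) S x := sR S (fun u => if Rle_dec u x then f u else 0).
Definition Fm (f : R -> R) S x := sR S (fun u => if Rlt_dec u x then f u else 0).
Definition Dz f S v := (up (Fz f S v) - up (Fm f S v))%Z.

Lemma key f : forall n S, length S = n -> NoDup S -> forall a b, a <= b ->
  sZ S (fun v => if in_intervalb (a,b) v then Dz f S v else 0%Z) = (up (Fz f S b) - up (Fm f S a))%Z.
Proof.
  induction n; intros S HL HN a b Hab.
  - destruct S; [|discriminate]. simpl. unfold Fz, Fm; simpl. lia.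
  - destruct (@lmax R S (fun x : R => x)) as [m [Hm Hmax]]; [intro; subst; discriminate|].
    destruct (in_split m S Hm) as [l1 [l2 ->]].
    set (S' := l1 ++ l2).
    assert (HN' : NoDup S') by (eapply NoDup_remove_1; eauto).
    assert (Hnm : ~ In m S') by (eapply NoDup_remove_2; eauto).
    assert (HL' : length S' = n) by (unfold S'; rewrite length_app in *; simpl in HL; lia).
    assert (Hlt : forall u, In u S' -> u < m).
    { intros u Hu. assert (u <> m) by (intro; subst; auto).
      assert (u <= m) by (apply Hmax; unfold S' in Hu; apply in_app_or in Hu; apply in_or_app;
        destruct Hu; [left|right; right]; auto). simpl in *. lra. }
    assert (HFz : forall x, Fz f (l1 ++ m :: l2) x = (if Rle_dec m x then f m else 0) + Fz f S' x)
      by (intros; unfold Fz; rewrite sR_mid; auto).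
    assert (HFm : forall x, Fm f (l1 ++ m :: l2) x = (if Rlt_dec m x then f m else 0) + Fm f S' x)
      by (intros; unfold Fm; rewrite sR_mid; auto).
    set (T := sR S' f).
    assert (HFzT : forall x, m <= x -> Fz f S' x = T).
    { intros; unfold Fz, T; apply sR_ext; intros u Hu; specialize (Hlt u Hu); destruct Rle_dec; lra. }
    assert (HFmT : forall x, m <= x -> Fm f S' x = T).
    { intros; unfold Fm, T; apply sR_ext; intros u Hu; specialize (Hlt u Hu); destruct Rlt_dec; lra. }
    rewrite sZ_mid.
    rewrite (sZ_ext S' _ (fun v => if in_intervalb (a,b) v then Dz f S' v else 0%Z)).
    2:{ intros v Hv. specialize (Hlt v Hv). unfold Dz. rewrite HFz, HFm.
        destruct (Rle_dec m v); [lra|]. destruct (Rlt_dec m v); [lra|].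
        rewrite !Rplus_0_l; auto. }
    rewrite (IHn S' HL' HN' a b Hab).
    unfold in_intervalb, Dz; simpl fst; simpl snd.
    rewrite !HFz, !HFm.
    destruct (Rle_dec a m); destruct (Rle_dec m b).
    + destruct (Rle_dec m m); [|lra]. destruct (Rlt_dec m m); [lra|].
      destruct (Rlt_dec m a); [lra|].
      rewrite (HFzT b r0), (HFzT m (Rle_refl m)), (HFmT m (Rle_refl m)). rewrite !Rplus_0_l. lia.
    + destruct (Rlt_dec m a); [lra|]. rewrite !Rplus_0_l. lia.
    + destruct (Rlt_dec m a); [|lra]. rewrite (HFzT b r), (HFmT a ltac:(lra)). lia.
    + lra.
Qed.

Lemma Fz_split f S a b : a <= b ->
  Fz f S b = Fm f S a + sR S (fun u => if in_intervalb (a,b) u then f u else 0).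
Proof. intros. unfold Fz, Fm. rewrite <- sR_plus. apply sR_ext; intros u _.
  unfold in_intervalb; simpl. destruct (Rle_dec u b), (Rlt_dec u a), (Rle_dec a u); lra. Qed.

Lemma Dz_nonneg f S v : (forall u, 0 <= f u) -> (0 <= Dz f S v)%Z.
Proof. intros Hf. unfold Dz. assert (Fm f S v <= Fz f S v).
  { unfold Fz, Fm. apply sR_le; intros u _. specialize (Hf u). destruct Rle_dec, Rlt_dec; lra. }
  apply up_mono in H. lia. Qed.

Definition gi (f : R -> R) (S : list R) (v : R) : nat :=
  if in_dec Req_dec_T v S then Z.to_nat (Dz f S v) else 0%nat.

Lemma gi_total f S : NoDup S -> (forall u, 0 <= f u) ->
  INR (nat_total S (gi f S)) <= sR S f.
Proof. intros HN Hf.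
  change (nat_total S (gi f S)) with (sN S (gi f S)).
  rewrite INR_IZR_INZ, sN_Z.
  destruct (list_bounds S) as [a [b [Hab Hb]]].
  rewrite (sZ_ext S _ (fun v => if in_intervalb (a,b) v then Dz f S v else 0%Z)).
  2:{ intros v Hv. unfold gi. destruct in_dec; [|contradiction]. rewrite Z2Nat.id by (apply Dz_nonneg; auto).
      specialize (Hb v Hv). unfold in_intervalb; simpl. destruct (Rle_dec a v), (Rle_dec v b); auto; lra. }
  rewrite (key f (length S) S eq_refl HN a b Hab).
  assert (E1 : Fz f S b = sR S f) by (unfold Fz; apply sR_ext; intros u Hu; specialize (Hb u Hu); destruct Rle_dec; lra).
  assert (E2 : Fm f S a = 0) by (unfold Fm; transitivity (sR S (fun _ : R => 0)); [apply sR_ext; intros u Hu; specialize (Hb u Hu); destruct Rlt_dec; lra | apply sR_zero]).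
  rewrite E1, E2, up0, minus_IZR. destruct (archimed (sR S f)). simpl. lra. Qed.

Lemma gi_mass f S a b (h : list interval) (k : nat) : NoDup S -> (forall u, 0 <= f u) -> a <= b -> In (a,b) h ->
  INR k <= sR S (fun u => if in_intervalb (a,b) u then f u else 0) ->
  (k <= nat_mass S (gi f S) h)%nat.
Proof. intros HN Hf Hab Hin Hk.
  apply Nat2Z.inj_le. change (nat_mass S (gi f S) h) with (sN S (fun v => if in_dintervalb h v then gi f S v else 0%nat)).
  rewrite sN_Z.
  apply Z.le_trans with (sZ S (fun v => if in_intervalb (a,b) v then Dz f S v else 0%Z)).
  - rewrite (key f (length S) S eq_refl HN a b Hab).
    assert (Fm f S a + IZR (Z.of_nat k) <= Fz f S b) by (rewrite (Fz_split f S a b Hab), <- INR_IZR_INZ; lra).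
    apply up_mono in H. rewrite up_shift in H. lia.
  - apply sZ_le. intros v Hv. destruct (in_intervalb (a,b) v) eqn:E.
    + assert (in_dintervalb h v = true) by (unfold in_dintervalb; apply existsb_exists; eauto).
      rewrite H. unfold gi. destruct in_dec; [|contradiction]. rewrite Z2Nat.id by (apply Dz_nonneg; auto). lia.
    + lia.
Qed.

Lemma mass_union S g h : (forall v, 0 <= g v) ->
  real_mass S g h <= sR h (fun J => sR S (fun u => if in_intervalb J u then g u else 0)).
Proof. intros Hg. induction h as [|J h IH].
  - change (real_mass S g []) with (sR S (fun v => if in_dintervalb [] v then g v else 0)).
    simpl. transitivity (sR S (fun _ : R => 0)); [right; apply sR_ext; auto|rewrite sR_zero; lra].
  - change (sR (J :: h) ?p) with (p J + sR h p).
    change (real_mass S g (J :: h)) with (sR S (fun v => if in_dintervalb (J::h) v then g v else 0)).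
    change (real_mass S g h) with (sR S (fun v => if in_dintervalb h v then g v else 0)) in IH.
    eapply Rle_trans; [|apply Rplus_le_compat_l; exact IH]. rewrite <- sR_plus.
    apply sR_le; intros v _. unfold in_dintervalb at 1; simpl. fold (in_dintervalb h v).
    specialize (Hg v). destruct (in_intervalb J v), (in_dintervalb h v); simpl; lra.
Qed.

Lemma int_cover d H w S g : (1 <= d)%nat -> Forall (is_dinterval d) H -> is_frac_w_cover H w S g ->
  is_w_cover H w S (gi (fun v => INR d * g v) S) /\
  INR (nat_total S (gi (fun v => INR d * g v) S)) <= INR d * real_total S g.
Proof. intros Hd HF [HN [Hg [Hz Hc]]].
  assert (Hd0 : 0 < INR d) by (apply lt_0_INR; lia).
  set (f := fun v => INR d * g v).
  assert (Hf : forall u, 0 <= f u) by (intros; unfold f; specialize (Hg u); nra).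
  split.
  - split; [auto|split].
    + intros v Hv. unfold gi. destruct in_dec; [contradiction|auto].
    + intros i Hi. set (h := nth i H []).
      assert (Hh : is_dinterval d h) by (rewrite Forall_forall in HF; apply HF, nth_In, Hi).
      destruct Hh as [Hlen [Hle _]].
      specialize (Hc i Hi). fold h in Hc.
      destruct (w i) as [|k] eqn:Ew; [lia|]. rewrite <- Ew in *.
      assert (HW : 0 < INR (w i)) by (rewrite Ew; apply lt_0_INR; lia).
      assert (Hne : h <> []).
      { intro E. rewrite E in Hc.
        change (real_mass S g []) with (sR S (fun v => if in_dintervalb [] v then g v else 0)) in Hc.
        assert (sR S (fun v => if in_dintervalb [] v then g v else 0) = 0)
          by (transitivity (sR S (fun _ : R => 0)); [apply sR_ext; intros; reflexivity | apply sR_zero]). lra. }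
      destruct (lmax h (fun J => sR S (fun u => if in_intervalb J u then g u else 0)) Hne) as [[a b] [HI Hmx]].
      rewrite Forall_forall in Hle. specialize (Hle _ HI). simpl in Hle.
      apply (gi_mass f S a b h (w i) HN Hf Hle HI).
      pose proof (mass_union S g h Hg).
      pose proof (sR_len h _ _ Hmx).
      set (m := sR S (fun u => if in_intervalb (a, b) u then g u else 0)) in *.
      assert (0 <= m) by (apply sR_nonneg; intros; destruct in_intervalb; auto; lra).
      assert (INR (length h) <= INR d) by (apply le_INR; auto).
      rewrite (sR_ext S _ (fun u => INR d * (if in_intervalb (a, b) u then g u else 0))).
      2:{ intros; unfold f; destruct in_intervalb; lra. }
      rewrite sR_scal. fold m. nra.
  - eapply Rle_trans; [apply gi_total; auto|].
    unfold f. rewrite sR_scal. right; reflexivity.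
Qed.

Theorem theorem1p9 (d : nat) (H : list (list interval)) (w : nat -> nat)
    (t : nat) (ts : R) :
  (1 <= d)%nat ->
  Forall (is_dinterval d) H ->
  tau_w H w t ->
  tau_star_w H w ts ->
  INR t <= INR d * ts.
Proof.
  intros Hd HF [_ Hmin] [_ Hglb].
  assert (Hd0 : 0 < INR d) by (apply lt_0_INR; lia).
  assert (INR t / INR d <= ts).
  { apply Hglb. intros x [S [g [Hc Ht]]].
    destruct (int_cover d H w S g Hd HF Hc) as [Hic Hb].
    pose proof (Hmin _ _ Hic). apply le_INR in H0.
    apply (Rmult_le_reg_l (INR d)); [lra|].
    replace (INR d * (INR t / INR d)) with (INR t) by (field; lra). subst x. lra. }
  apply (Rmult_le_compat_l (INR d)) in H0; [|lra].
  replace (INR d * (INR t / INR d)) with (INR t) in H0 by (field; lra). lra.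
Qed.
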